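(* Let $G$ be a metrizable topological group. The following assertions are equivalent: (a) $G$ is separable; (b) $G$ is CCC; (c) $G$ is $\aleph_0$-bounded; (d) $C(G)$ has the countable sup property.
   Context: $G$ is CCC if every family of pairwise disjoint open subsets of $G$ is countable. $G$ is $\aleph_0$-bounded if for every nonempty open set $U\subseteq G$ there is a countable set $S\subseteq G$ with $G=U\cdot S=\bigcup_{s\in S}Us$. $C(G)$ is the vector lattice of real-valued continuous functions on $G$ with the pointwise order; a vector lattice has the countable sup property if every nonempty subset possessing a supremum contains a countable subset with the same supremum. *)

(* Defs.v *)
From HB Require Import structures.
From mathcomp Require Import all_boot all_order all_algebra.
From mathcomp Require Import all_classical all_reals all_analysis.
Set Implicit Arguments.
Unset Strict Implicit.
Unset Printing Implicit Defensive.
Import Order.TTheory GRing.Theory Num.Theory.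
Import numFieldTopology.Exports.
Local Open Scope classical_set_scope.
Local Open Scope ring_scope.

Definition topological_group (G : topologicalType)
    (mul : G -> G -> G) (inv : G -> G) (one : G) : Prop :=
  [/\ (forall x y z, mul x (mul y z) = mul (mul x y) z),
      (forall x, mul one x = x),
      (forall x, mul (inv x) x = one),
      continuous (fun p : G * G => mul p.1 p.2) &
      continuous inv].

Definition metrizable (R : realType) (G : topologicalType) : Prop :=
  exists d : G -> G -> R,
    [/\ (forall x y, 0 <= d x y),
        (forall x y, d x y = 0 <-> x = y),
        (forall x y, d x y = d y x),
        (forall x y z, d x z <= d x y + d y z) &
        (forall (x : G) (A : set G),
            nbhs x A <-> exists2 e : R, 0 < e & [set y | d x y < e] `<=` A)].

Definition separable (G : topologicalType) : Prop :=
  exists D : set G, countable D /\ dense D.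

Definition ccc (G : topologicalType) : Prop :=
  forall F : set (set G),
    (forall U, F U -> open U) -> trivIset F id -> countable F.

Definition aleph0_bounded (G : topologicalType) (mul : G -> G -> G) : Prop :=
  forall U : set G, open U -> U !=set0 ->
    exists S : set G, countable S /\
      [set: G] = \bigcup_(s in S) [set mul u s | u in U].

Definition is_sup_CG (R : realType) (G : topologicalType)
    (F : set (G -> R)) (f : G -> R) : Prop :=
  [/\ continuous f,
      (forall g, F g -> forall x, g x <= f x) &
      (forall h : G -> R, continuous h ->
         (forall g, F g -> forall x, g x <= h x) -> forall x, f x <= h x)].

Definition countable_sup_property (R : realType) (G : topologicalType) : Prop :=
  forall (F : set (G -> R)) (f : G -> R),
    (forall g, F g -> continuous g) -> F !=set0 -> is_sup_CG F f ->
    exists F0 : set (G -> R), [/\ F0 `<=` F, countable F0 & is_sup_CG F0 f].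

(* Main.v *)
Require Import Defs.
From HB Require Import structures.
From mathcomp Require Import all_boot all_order all_algebra.
From mathcomp Require Import all_classical all_reals all_analysis.
From mathcomp Require Import lra ring.
Import Order.TTheory GRing.Theory Num.Theory.
Import numFieldTopology.Exports.
Set Implicit Arguments.
Unset Strict Implicit.
Unset Printing Implicit Defensive.
Local Open Scope classical_set_scope.
Local Open Scope ring_scope.

Lemma small_inv (R : realType) (r : R) : 0 < r -> exists n : nat, n.+1%:R^-1 < r.
Proof. by move=> /ltr_add_invr [k]; rewrite add0r => h; exists k. Qed.

Definition clamp (R : realType) (t : R) := Num.min 1 (Num.max 0 t).

Lemma clamp_lip (R : realType) (u v : R) : `|clamp u - clamp v| <= `|u - v|.
Proof.
rewrite /clamp.
have n1 := ler_norm (u - v); have n2 := ler_norm (v - u).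
rewrite distrC in n2.
case: (lerP 0 u) => h1; case: (lerP 0 v) => h2;
case: (lerP 1 u) => h3; case: (lerP 1 v) => h4; rewrite ?(min_r (@ler01 R));
rewrite ler_norml; apply/andP; split; lra.
Qed.

Lemma clamp_ge0 (R : realType) (u : R) : 0 <= clamp u.
Proof. rewrite /clamp; case: (lerP 0 u) => h1; case: (lerP 1 u) => h3; rewrite ?(min_r (@ler01 R)); lra. Qed.
Lemma clamp_le1 (R : realType) (u : R) : clamp u <= 1.
Proof. rewrite /clamp; case: (lerP 0 u) => h1; case: (lerP 1 u) => h3; rewrite ?(min_r (@ler01 R)); lra. Qed.
Lemma clamp_id (R : realType) (u : R) : 0 <= u <= 1 -> clamp u = u.
Proof. move=> /andP[a b]; rewrite /clamp; case: (lerP 0 u) => h1; case: (lerP 1 u) => h3; rewrite ?(min_r (@ler01 R)); lra. Qed.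
Lemma clamp_le0 (R : realType) (u : R) : u <= 0 -> clamp u = 0.
Proof. move=> a; rewrite /clamp; case: (lerP 0 u) => h1; case: (lerP 1 u) => h3; rewrite ?(min_r (@ler01 R)); lra. Qed.
Lemma clamp_ge1 (R : realType) (u : R) : 1 <= u -> clamp u = 1.
Proof. move=> a; rewrite /clamp; case: (lerP 0 u) => h1; case: (lerP 1 u) => h3; rewrite ?(min_r (@ler01 R)); lra. Qed.


Lemma countableU' T (A B : set T) : countable A -> countable B -> countable (A `|` B).
Proof.
move=> cA cB.
have -> : A `|` B = \bigcup_(i in [set: bool]) (if i then A else B).
  apply/seteqP; split => x.
    by case => h; [exists true | exists false].
  by move=> [[]] _ h; [left|right].
by apply: bigcup_countable => // -[].
Qed.

Section Metric.
Variables (R : realType) (G : topologicalType) (d : G -> G -> R).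
Hypotheses (d0 : forall x y, 0 <= d x y) (dxx : forall x y, d x y = 0 <-> x = y)
  (dsym : forall x y, d x y = d y x) (dtri : forall x y z, d x z <= d x y + d y z)
  (dnbhs : forall (x : G) (A : set G),
     nbhs x A <-> exists2 e : R, 0 < e & [set y | d x y < e] `<=` A).

Lemma dself x : d x x = 0. Proof. exact/dxx. Qed.

Lemma ball_open x e : open [set y | d x y < e].
Proof.
rewrite openE => y /= hy; rewrite /interior; apply/dnbhs.
exists (e - d x y); first by rewrite subr_gt0.
move=> z /= hz; have := dtri x y z; lra.
Qed.

Lemma open_ball (A : set G) x : open A -> A x ->
  exists2 e, 0 < e & [set y | d x y < e] `<=` A.
Proof. by rewrite openE => H /H; rewrite /interior => /dnbhs. Qed.

Lemma cont_ball (f : G -> R) x : continuous f -> forall e, 0 < e ->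
  exists2 r, 0 < r & forall y, d x y < r -> `|f x - f y| < e.
Proof.
move=> fc e e0.
have : nbhs (f x) [set t | `|f x - t| < e] by apply/nbhs_ballP; exists e.
by move=> /(fc x) /dnbhs [r r0 H]; exists r => // y /H.
Qed.

Lemma lip_cont (f : G -> R) (c : R) : 0 < c ->
  (forall y z, `|f y - f z| <= c * d y z) -> continuous f.
Proof.
move=> c0 fl x B /nbhs_ballP [e e0 H]; apply/dnbhs; exists (e / c).
  by rewrite divr_gt0.
move=> y /= hy; apply: H; rewrite /ball /=.
rewrite ltr_pdivlMr // in hy; have := fl x y; rewrite mulrC; lra.
Qed.


Lemma sep_csp : separable G -> countable_sup_property R G.
Proof.
move=> [D [Dc Dd]] F f Fc _ [fc fub fle].
pose cond (k : rat * G * nat) (g : G -> R) :=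
  [set y | d k.1.2 y < k.2.+1%:R^-1] `<=` [set y | ratr k.1.1 < g y].
have /choice [phi Hphi] : forall k, exists g : G -> R,
    (exists g', F g' /\ cond k g') -> F g /\ cond k g.
  move=> k; have [[g' Hg']|nk] := pselect (exists g', F g' /\ cond k g').
    by exists g'.
  by exists (fun _ => 0) => /nk.
pose K := [set k : rat * G * nat | D k.1.2 /\ exists g', F g' /\ cond k g'].
exists (phi @` K); split.
- by move=> _ [k [_ Kk] <-]; case: (Hphi k Kk).
- apply: sub_countable (card_image_le _ _) _.
  apply: (@sub_countable _ _ _ ([set: rat] `*` D `*` [set: nat])).
    by apply: subset_card_le => -[[q a] n] [Da _].
  by apply: countableX => //; apply: countableX.
- split => // [g [k [_ Kk] <-]|h hc hub x]; first by apply: fub; case: (Hphi k Kk).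
  apply: fle => // g Fg y; rewrite leNgt; apply/negP => hy.
  have [q] := rat_in_itvoo hy; rewrite in_itv /= => /andP[q1 q2].
  have e0 : 0 < g y - ratr q by rewrite subr_gt0.
  have [r r0 Hr] := cont_ball y (Fc g Fg) e0.
  have Hr' : forall z, d y z < r -> ratr q < g z.
    by move=> z /Hr; rewrite ltr_norml => /andP[]; lra.
  have r20 : 0 < r / 2 by rewrite divr_gt0.
  have [n hn] := small_inv r20.
  have [a [ya Da]] : exists a, [set z | d y z < n.+1%:R^-1] a /\ D a.
    apply: Dd; last exact: ball_open.
    by exists y; rewrite /= dself.
  have Kk : K (q, a, n).
    split => //; exists g; split => // z /= hz; apply: Hr'.
    move: ya hz => /= ya hz; have := dtri y a z.
    move: (n.+1%:R^-1 : R) hn ya hz => e; lra.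
  have [Fp cp] := Hphi _ Kk.2.
  have := hub (phi (q, a, n)) (ex_intro2 _ _ _ Kk erefl) y.
  have := cp y; rewrite /= dsym => /(_ ya); lra.
Qed.


Lemma clamp_cont (c : G) (a s : R) : continuous (fun y => clamp (a + s * d c y)).
Proof.
apply: (@lip_cont _ (`|s| + 1)); first by have := normr_ge0 s; lra.
move=> y z; apply: le_trans (clamp_lip _ _) _.
have -> : a + s * d c y - (a + s * d c z) = s * (d c y - d c z) by ring.
rewrite normrM.
have h1 : `|d c y - d c z| <= d y z.
  rewrite ler_norml; apply/andP; split.
    have := dtri c y z; lra.
  have := dtri c z y; rewrite (dsym z y); lra.
have := normr_ge0 s; have := normr_ge0 (d c y - d c z); have := d0 y z; nra.
Qed.

Lemma csp_ccc : countable_sup_property R G -> ccc G.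
Proof.
move=> csp F Fo Ft; apply: contrapT => nF.
pose W := \bigcup_(U in F) U.
pose GG := [set g : G -> R | [/\ continuous g, (forall y, g y <= 1) &
   ((exists2 U, F U & forall y, ~ U y -> g y = 0) \/ (forall y, W y -> g y = 0))]].
pose bump c r := fun y => clamp (1 + (- r^-1) * d c y).
have bump_c c r : continuous (bump c r) by exact: clamp_cont.
have bump_cc c r : bump c r c = 1 by rewrite /bump dself mulr0 addr0 clamp_ge1.
have bump_out c r y : 0 < r -> r <= d c y -> bump c r y = 0.
  move=> r0 h; rewrite /bump clamp_le0 //.
  have : 1 <= r^-1 * d c y by rewrite ler_pdivlMl // mulr1.
  rewrite mulNr; lra.
have supGG : is_sup_CG GG (fun _ => 1).
  split; [exact: cst_continuous | by move=> g [_ g1 _] | ].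
  move=> h hc hub x; rewrite leNgt; apply/negP => hx.
  have e0 : 0 < 1 - h x by rewrite subr_gt0.
  have [r r0 Hr] := cont_ball x hc e0.
  have Hr' : forall y, d x y < r -> h y < 1.
    by move=> y /Hr; rewrite ltr_norml => /andP[]; lra.
  have [[y [xy [U FU Uy]]]|nW] := pselect (exists y, d x y < r /\ W y).
    have [rho rho0 HU] := open_ball (Fo U FU) Uy.
    have : GG (bump y rho).
      split => //; first by move=> z; apply: clamp_le1.
      left; exists U => // z nUz; apply: bump_out => //.
      by rewrite leNgt; apply/negP => /HU.
    move=> /hub /(_ y); rewrite bump_cc; have := Hr' y xy; lra.
  have : GG (bump x r).
    split => //; first by move=> z; apply: clamp_le1.
    right => z Wz; apply: bump_out => //.
    by rewrite leNgt; apply/negP => xz; apply: nW; exists z.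
  move=> /hub /(_ x); rewrite bump_cc; lra.
have [F0 [F0G F0c F0sup]] : exists F0,
    [/\ F0 `<=` GG, countable F0 & is_sup_CG F0 (fun _ => 1)].
  apply: csp => //; first by move=> g [].
  exists (fun _ => 0); split; [exact: cst_continuous | by move=> _; exact: ler01 | right].
  by [].
pose T := \bigcup_(g in F0) [set U | F U /\ exists y, U y /\ g y != 0].
have Tc : countable T.
  apply: bigcup_countable => // g F0g.
  have [[U0 [FU0 [y0 [U0y0 gy0]]]]|nU] :=
     pselect (exists U0, F U0 /\ exists y, U0 y /\ g y != 0).
    apply: (@sub_countable _ _ _ [set U0]); last exact: countable1.
    apply: subset_card_le => U [FU [y [Uy gy]]].
    have [_ _ [[U' FU' HU']|Hw]] := F0G g F0g.
      have U'y : U' y.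
        by apply: contrapT => /HU' gy'; move: gy; rewrite gy' eqxx.
      have U'y0 : U' y0.
        by apply: contrapT => /HU' gy'; move: gy0; rewrite gy' eqxx.
      have -> : U = U' by apply: Ft => //; exists y.
      by apply: Ft => //; exists y0.
    by move: gy; rewrite Hw ?eqxx //; exists U.
  apply: (@sub_countable _ _ _ (@set0 (set G))) => //.
  by apply: subset_card_le => U HU; apply: nU; exists U.
have [U [FU [x Ux] nTU]] : exists U, [/\ F U, U !=set0 & ~ T U].
  apply: contrapT => nE; apply: nF.
  apply: (@sub_countable _ _ _ (T `|` [set set0])); last first.
    by apply: countableU' => //; exact: countable1.
  apply: subset_card_le => U FU.
  have [|nT] := pselect (T U); first by left.
  right; apply/seteqP; split => // y Uy; apply: nE; exists U; split => //.
  by exists y.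
have [rho rho0 HU] := open_ball (Fo U FU) Ux.
pose hf := fun y => clamp (0 + rho^-1 * d x y).
have [_ _ Hle] := F0sup.
have ub : forall g, F0 g -> forall z, g z <= hf z.
  move=> g F0g z; have [_ g1 _] := F0G g F0g.
  have [hz|hz] := lerP rho (d x z).
    rewrite /hf clamp_ge1 ?g1 // add0r.
    by rewrite ler_pdivlMl // mulr1.
  have gz : g z = 0.
    apply: contrapT => gz; apply: nTU; exists g => //; split => //.
    by exists z; split; [exact: HU | exact/eqP].
  by rewrite gz; exact: clamp_ge0.
have := Hle hf (@clamp_cont x 0 rho^-1) ub x.
rewrite /hf dself mulr0 addr0 clamp_le0 //; lra.
Qed.


Lemma ccc_sep : ccc G -> separable G.
Proof.
move=> hccc.
pose e (n : nat) : R := n.+1%:R^-1.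
have e0 n : 0 < e n by rewrite invr_gt0 ltr0n.
pose B n (a : G) := [set y | d a y < e n].
pose E n := proj1_sig (ex_maximal_disjoint_subcollection (B n) setT).
have HE n : maximal_disjoint_subcollection (B n) (E n) setT :=
  proj2_sig (ex_maximal_disjoint_subcollection (B n) setT).
have Bc n a : B n a a by rewrite /B /= dself.
have Ec n : countable (E n).
  have [_ tE _] := HE n.
  have cI : countable (B n @` E n).
    apply: hccc; first by move=> _ [a _ <-]; exact: ball_open.
    by move=> _ _ [a Ea <-] [b Eb <-] hab; rewrite (tE a b Ea Eb hab).
  move/countable_injP: cI => [f finj]; apply/countable_injP.
  exists (f \o B n) => a b /set_mem Ea /set_mem Eb /= hf.
  have hB := finj _ _ (mem_set (imageP _ Ea)) (mem_set (imageP _ Eb)) hf.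
  apply: tE => //; exists a; split => //; rewrite -hB; exact: Bc.
exists (\bigcup_(n in setT) E n); split.
  by apply: bigcup_countable.
move=> O [x Ox] oO.
have [r r0 Hr] := open_ball oO Ox.
have r20 : 0 < r / 2 by rewrite divr_gt0.
have [n hn] := small_inv r20.
have [a [Ea [z [xz az]]]] : exists a, E n a /\ (B n x `&` B n a !=set0).
  apply: contrapT => nex.
  have [_ tE mE] := HE n.
  apply: (mE (E n `|` [set x])).
  - split; first by move=> y Ey; left.
    move=> /(_ x (or_intror erefl)) Ex; apply: nex; exists x; split => //.
    by exists x; split; apply: Bc.
  - by [].
  - move=> i j [Ei|->] [Ej|->] hij.
    + exact: tE.
    + by exfalso; apply: nex; exists i; split => //; rewrite setIC.
    + by exfalso; apply: nex; exists j.
    + by [].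
exists a; split; last by exists n.
apply: Hr; move: xz az; rewrite /B /= => xz az.
have := dtri x z a; rewrite (dsym z a).
have hn' : e n < r / 2 := hn.
move: (e n) hn' xz az => en; lra.
Qed.

End Metric.

Section Group.
Variables (R : realType) (G : topologicalType) (d : G -> G -> R).
Hypotheses (d0 : forall x y, 0 <= d x y) (dxx : forall x y, d x y = 0 <-> x = y)
  (dsym : forall x y, d x y = d y x) (dtri : forall x y z, d x z <= d x y + d y z)
  (dnbhs : forall (x : G) (A : set G),
     nbhs x A <-> exists2 e : R, 0 < e & [set y | d x y < e] `<=` A).
Variables (mul : G -> G -> G) (inv : G -> G) (one : G).
Hypotheses (mA : forall x y z, mul x (mul y z) = mul (mul x y) z)
  (m1 : forall x, mul one x = x) (mV : forall x, mul (inv x) x = one)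
  (mc : continuous (fun p : G * G => mul p.1 p.2)) (ic : continuous inv).

Lemma mulV x : mul x (inv x) = one.
Proof.
set y := mul x (inv x).
have yy : mul y y = y by rewrite /y -mA (mA (inv x) x) mV m1.
apply/esym; rewrite -(mV y) -{2}yy mA mV m1 //.
Qed.

Lemma mul1 x : mul x one = x.
Proof. by rewrite -(mV x) mA mulV m1. Qed.

Lemma inv1 : inv one = one.
Proof. by rewrite -{1}(mul1 (inv one)) mV. Qed.

Lemma cont_l x s B : nbhs (mul x s) B -> nbhs s [set t | B (mul x t)].
Proof.
move=> HB; have := @mc (x, s) B HB.
move=> /= [[P Q] /= [Px Qs] PQ].
apply: filterS Qs => t Qt; apply: (PQ (x, t)); split => //=.
exact: nbhs_singleton.
Qed.

Lemma cont_r x s B : nbhs (mul s x) B -> nbhs s [set t | B (mul t x)].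
Proof.
move=> HB; have := @mc (s, x) B HB.
move=> /= [[P Q] /= [Ps Qx] PQ].
apply: filterS Ps => t Pt; apply: (PQ (t, x)); split => //=.
exact: nbhs_singleton.
Qed.

Lemma open_l x (U : set G) : open U -> open [set t | U (mul x t)].
Proof.
move=> oU; rewrite openE => t /= Ut; rewrite /interior; apply: cont_l.
by move: oU; rewrite openE => /(_ _ Ut).
Qed.

Lemma sep_ab : separable G -> aleph0_bounded mul.
Proof.
move=> [D [Dc Dd]] U oU [u0 Uu0].
exists (inv @` D); split; first exact: sub_countable (card_image_le _ _) Dc.
apply/seteqP; split => // x _.
have [a [Ua Da]] : [set t | U (mul x t)] `&` D !=set0.
  apply: Dd; last exact: open_l.
  by exists (mul (inv x) u0); rewrite /= mA mulV m1.
exists (inv a); first by exists a.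
by exists (mul x a) => //; rewrite -mA mulV mul1.
Qed.

Lemma ab_sep : aleph0_bounded mul -> separable G.
Proof.
move=> ab.
pose e (n : nat) : R := n.+1%:R^-1.
have e0 n : 0 < e n by rewrite invr_gt0 ltr0n.
have /choice [S HS] : forall n : nat, exists S, countable S /\
    [set: G] = \bigcup_(s in S) [set mul u s | u in [set y | d one y < e n]].
  move=> n; apply: ab; first exact: ball_open.
  by exists one; rewrite /= (proj2 (dxx one one) erefl).
exists (\bigcup_(n in setT) S n); split.
  apply: bigcup_countable => [|n _]; [exact: countableP | by case: (HS n)].
move=> O [x Ox] oO.
have nO : nbhs one [set v | O (mul (inv v) x)].
  have h1 : nbhs (mul (inv one) x) O.
    by rewrite inv1 m1; move: oO; rewrite openE => /(_ _ Ox).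
  have h2 := cont_r h1.
  exact: @ic one _ h2.
have [r r0 Hr] := (dnbhs one _).1 nO.
have [n hn] := small_inv r0.
have [_ HSn] := HS n.
have : [set: G] x by [].
rewrite HSn => -[s Ss [v vb vs]].
exists s; split; last by exists n.
have -> : s = mul (inv v) x by rewrite -vs mA mV m1.
apply: Hr; move: vb; rewrite /=.
have hn' : e n < r := hn.
move: (e n) hn' => en; lra.
Qed.

End Group.

Unset Implicit Arguments.

Theorem theorem4p10 (R : realType) (G : topologicalType)
    (mul : G -> G -> G) (inv : G -> G) (one : G) :
  topological_group mul inv one -> metrizable R G ->
  [<-> separable G; ccc G; aleph0_bounded mul; countable_sup_property R G].
Proof.
move=> [mA m1 mV mc ic] [d [d0 dxx dsym dtri dn]].
have ad : separable G -> countable_sup_property R G.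
  by apply: sep_csp; eassumption.
have db : countable_sup_property R G -> ccc G.
  by apply: csp_ccc; eassumption.
have ba : ccc G -> separable G.
  by apply: ccc_sep; eassumption.
have ac : separable G -> aleph0_bounded mul.
  by apply: sep_ab; eassumption.
have ca : aleph0_bounded mul -> separable G.
  by apply: ab_sep; eassumption.
tfae.
- by move/ad/db.
- by move/ba/ac.
- by move/ca/ad.
- by move/db/ba.
Qed.
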